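(* Let $Y$ be a finite set (and $X$ a finite set), $\rho\in(0,1/2)$, $\delta_2\in(0,1/2)$, $\gamma>0$. Every deterministic protocol for $\textsc{Agree}_{\delta_2,\gamma}(\mathcal D_\rho)$ yields (by interpreting Alice's and Bob's input strings $r,s\in\{0,1\}^{|Y|}$ as the truth tables of $f',g':Y\to\{0,1\}$) a deterministic protocol, with the same communication, for $\textsc{Agreement-Distillation}^k_{\gamma,\rho}$ on strings of length $|Y|$, where $k=(1-h(\delta_2))|Y|$ and $h(x)=-x\log x-(1-x)\log(1-x)$ is the binary entropy function.
   Context: For Boolean functions on $X\times Y$, $\delta(f,g)$ is the fraction of $(x,y)\in X\times Y$ with $f(x,y)\ne g(x,y)$. $\mathcal F_B$ is the set of functions $f:X\times Y\to\{0,1\}$ of the form $f(x,y)=f'(y)$ for some $f':Y\to\{0,1\}$. $\mathcal D_\rho$ is the distribution on pairs $(f,g)$ obtained by drawing $f$ uniformly from $\mathcal F_B$ and setting $g(x,y)=g'(y)$ where independently for each $y\in Y$, $g'(y)=f'(y)$ with probability $1-\rho$ and $g'(y)=1-f'(y)$ with probability $\rho$. $\textsc{Agree}_{\delta_2,\gamma}(\mathcal D_\rho)$: Alice gets $f$, Bob gets $g$ with $(f,g)\sim\mathcal D_\rho$; Alice outputs $q_A$, Bob outputs $q_B$ with always $\delta(q_A,f)\le\delta_2$, $\delta(q_B,g)\le\delta_2$, and $\Pr[q_A=q_B]\ge\gamma$ over the input distribution. A pair $(r,s)\in\{0,1\}^m\times\{0,1\}^m$ is $\rho$-perturbed if the pairs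 $(r_i,s_i)$ are independent, each $r_i$ uniform and $s_i=r_i$ with probability $1-\rho$, $s_i\ne r_i$ with probability $\rho$. $\textsc{Agreement-Distillation}^k_{\gamma,\rho}$: Alice gets $r$ and Bob gets $s$ with $(r,s)$ $\rho$-perturbed; they communicate deterministically and output $w_A$, $w_B$ such that $H_\infty(w_A),H_\infty(w_B)\ge k$ and $\Pr[w_A=w_B]\ge\gamma$, where $H_\infty(W)=\min_{w\in\mathrm{supp}(W)}(-\log\Pr[W=w])$. Logs base 2. *)

(* Defs.v *)
From HB Require Import structures.
From mathcomp Require Import all_boot.
From Stdlib Require Import Reals.

Set Implicit Arguments.
Unset Strict Implicit.
Unset Printing Implicit Defensive.

Inductive proto (A B : Type) : Type :=
| PDone
| PAlice (msg : A -> bool) (next : bool -> proto A B)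
| PBob (msg : B -> bool) (next : bool -> proto A B).

Arguments PDone {A B}.

Fixpoint transcript A B (p : proto A B) (a : A) (b : B) : seq bool :=
  match p with
  | PDone => [::]
  | PAlice m k => m a :: transcript (k (m a)) a b
  | PBob m k => m b :: transcript (k (m b)) a b
  end.

Fixpoint depth A B (p : proto A B) : nat :=
  match p with
  | PDone => 0
  | PAlice _ k => (maxn (depth (k true)) (depth (k false))).+1
  | PBob _ k => (maxn (depth (k true)) (depth (k false))).+1
  end.

Record dprotocol (A B O : Type) := DProtocol {
  dp_tree : proto A B;
  dp_outA : A -> seq bool -> O;
  dp_outB : B -> seq bool -> O
}.

Definition comm A B O (P : dprotocol A B O) : nat := depth (dp_tree P).

Definition runA A B O (P : dprotocol A B O) (a : A) (b : B) : O :=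
  dp_outA P a (transcript (dp_tree P) a b).
Definition runB A B O (P : dprotocol A B O) (a : A) (b : B) : O :=
  dp_outB P b (transcript (dp_tree P) a b).

Fixpoint proto_comap A B A' B' (fa : A' -> A) (fb : B' -> B) (p : proto A B)
  : proto A' B' :=
  match p with
  | PDone => PDone
  | PAlice m k => PAlice (fun a' => m (fa a')) (fun c => proto_comap fa fb (k c))
  | PBob m k => PBob (fun b' => m (fb b')) (fun c => proto_comap fa fb (k c))
  end.

Definition dp_comap A B A' B' O (fa : A' -> A) (fb : B' -> B)
  (P : dprotocol A B O) : dprotocol A' B' O :=
  DProtocol (proto_comap fa fb (dp_tree P))
            (fun a' t => dp_outA P (fa a') t)
            (fun b' t => dp_outB P (fb b') t).

Local Open Scope R_scope.

Definition Rsum (T : finType) (F : T -> R) : R := \big[Rplus/0]_(t : T) F t.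
Definition Rprod (T : finType) (F : T -> R) : R := \big[Rmult/1]_(t : T) F t.
Definition b2R (b : bool) : R := if b then 1 else 0.

Definition log2 (x : R) : R := ln x / ln 2.

Definition binent (x : R) : R := - x * log2 x - (1 - x) * log2 (1 - x).

Definition delta (T : finType) (f g : {ffun T -> bool}) : R :=
  INR #|[set t | f t != g t]| / INR #|T|.

(* Probability weight of a rho-perturbed pair (r, s) indexed by I:
   r uniform, each coordinate of s flipped independently with prob. rho. *)
Definition pert_weight (I : finType) (rho : R) (r s : {ffun I -> bool}) : R :=
  (/ 2) ^ #|I| * Rprod (fun i : I => if r i == s i then 1 - rho else rho).

Definition liftB (X Y : finType) (f' : {ffun Y -> bool}) : {ffun X * Y -> bool} :=
  [ffun p => f' p.2].

Definition F_B (X Y : finType) : {set {ffun X * Y -> bool}} :=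
  [set liftB X f' | f' : {ffun Y -> bool}].

(* Pr_{(f,g) ~ D_rho}[E f g]; f uniform on F_B corresponds to f' uniform,
   since liftB is injective. *)
Definition Pr_D (X Y : finType) (rho : R)
  (E : {ffun X * Y -> bool} -> {ffun X * Y -> bool} -> bool) : R :=
  Rsum (fun f' : {ffun Y -> bool} => Rsum (fun g' : {ffun Y -> bool} =>
    pert_weight rho f' g' * b2R (E (liftB X f') (liftB X g')))).

Definition Pr_pert (m : nat) (rho : R)
  (E : {ffun 'I_m -> bool} -> {ffun 'I_m -> bool} -> bool) : R :=
  Rsum (fun r : {ffun 'I_m -> bool} => Rsum (fun s : {ffun 'I_m -> bool} =>
    pert_weight rho r s * b2R (E r s))).

Definition Hinf_ge (m : nat) (rho : R) (O : eqType)
  (W : {ffun 'I_m -> bool} -> {ffun 'I_m -> bool} -> O) (k : R) : Prop :=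
  forall w : O, 0 < Pr_pert rho (fun r s => W r s == w) ->
    k <= - log2 (Pr_pert rho (fun r s => W r s == w)).

(* Agree_{delta2,gamma}(D_rho): Alice gets f, Bob gets g, (f,g) ~ D_rho;
   always (for every (f,g) in the support F_B x F_B) delta(q_A,f) <= delta2 and
   delta(q_B,g) <= delta2; and Pr[q_A = q_B] >= gamma. *)
Definition solves_Agree (X Y : finType) (delta2 gamma rho : R)
  (P : dprotocol {ffun X * Y -> bool} {ffun X * Y -> bool} {ffun X * Y -> bool})
  : Prop :=
  (forall f g, f \in F_B X Y -> g \in F_B X Y ->
     delta (runA P f g) f <= delta2 /\ delta (runB P f g) g <= delta2) /\
  gamma <= Pr_D rho (fun f g => runA P f g == runB P f g).

Definition solves_Distill (m : nat) (k gamma rho : R) (O : eqType)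
  (P : dprotocol {ffun 'I_m -> bool} {ffun 'I_m -> bool} O) : Prop :=
  Hinf_ge rho (runA P) k /\ Hinf_ge rho (runB P) k /\
  gamma <= Pr_pert rho (fun r s => runA P r s == runB P r s).

Definition truth_table (X Y : finType) (r : {ffun 'I_#|Y| -> bool})
  : {ffun X * Y -> bool} :=
  [ffun p => r (enum_rank p.2)].

(* Main.v *)
Require Import Defs.
From HB Require Import structures.
From mathcomp Require Import all_boot.
From Stdlib Require Import Reals Lra.

Set Implicit Arguments.
Unset Strict Implicit.
Local Open Scope R_scope.
Set Warnings "-notation-overridden".
Lemma RplusA : associative Rplus. Proof. move=>*; by rewrite Rplus_assoc. Qed.
Lemma RmultA : associative Rmult. Proof. move=>*; by rewrite Rmult_assoc. Qed.

HB.instance Definition _ := Monoid.isComLaw.Build R 0 Rplus RplusA Rplus_comm Rplus_0_l.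
HB.instance Definition _ := Monoid.isComLaw.Build R 1 Rmult RmultA Rmult_comm Rmult_1_l.
HB.instance Definition _ := Monoid.isMulLaw.Build R 0 Rmult Rmult_0_l Rmult_0_r.
HB.instance Definition _ := Monoid.isAddLaw.Build R Rmult Rplus Rmult_plus_distr_r Rmult_plus_distr_l.

Lemma transcript_comap A B A' B' (fa : A' -> A) (fb : B' -> B) (p : proto A B) a b :
  transcript (proto_comap fa fb p) a b = transcript p (fa a) (fb b).
Proof. by elim: p => [|m k IH|m k IH] //=; rewrite IH. Qed.

Lemma depth_comap A B A' B' (fa : A' -> A) (fb : B' -> B) (p : proto A B) :
  depth (proto_comap fa fb p) = depth p.
Proof. by elim: p => [|m k IH|m k IH] //=; rewrite !IH. Qed.

Lemma runA_comap A B A' B' O (fa : A' -> A) (fb : B' -> B) (P : dprotocol A B O) a b :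
  runA (dp_comap fa fb P) a b = runA P (fa a) (fb b).
Proof. by rewrite /runA /= transcript_comap. Qed.
Lemma runB_comap A B A' B' O (fa : A' -> A) (fb : B' -> B) (P : dprotocol A B O) a b :
  runB (dp_comap fa fb P) a b = runB P (fa a) (fb b).
Proof. by rewrite /runB /= transcript_comap. Qed.

Section Reidx.
Variable Y : finType.
Definition psi (r : {ffun 'I_#|Y| -> bool}) : {ffun Y -> bool} := [ffun y => r (enum_rank y)].
Definition phi (f : {ffun Y -> bool}) : {ffun 'I_#|Y| -> bool} := [ffun i => f (enum_val i)].
Lemma psiK : cancel psi phi.
Proof. by move=> r; apply/ffunP=> i; rewrite !ffunE enum_valK. Qed.
Lemma phiK : cancel phi psi.
Proof. by move=> f; apply/ffunP=> i; rewrite !ffunE enum_rankK. Qed.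
Lemma psi_bij : bijective psi.
Proof. exact: (Bijective psiK phiK). Qed.

Lemma pw_psi rho r s : pert_weight rho (psi r) (psi s) = pert_weight rho r s.
Proof.
rewrite /pert_weight card_ord /Rprod; congr (_ * _).
rewrite (reindex (fun i : 'I_#|Y| => enum_val i)) /=; last by apply: onW_bij; exact: enum_val_bij.
by apply: eq_bigr => i _; rewrite !ffunE enum_valK.
Qed.

Lemma tt_psi (X : finType) r : truth_table X r = liftB X (psi r).
Proof. by apply/ffunP=> p; rewrite !ffunE. Qed.
End Reidx.

Lemma Rsum_le (T : finType) (F G : T -> R) : (forall t, F t <= G t) -> Rsum F <= Rsum G.
Proof. move=> H; rewrite /Rsum; apply: (big_ind2 (fun a b => a <= b)) => //; [lra|]. move=> *; lra. Qed.

Lemma Rsum_ge0 (T : finType) (F : T -> R) : (forall t, 0 <= F t) -> 0 <= Rsum F.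
Proof. move=> H; rewrite /Rsum; apply: (big_ind (fun a => 0 <= a)) => //; [lra|]. move=> *; lra. Qed.

Lemma Rprod_ge0 (T : finType) (F : T -> R) : (forall t, 0 <= F t) -> 0 <= Rprod F.
Proof. move=> H; rewrite /Rprod; apply: (big_ind (fun a => 0 <= a)) => //; [lra|]. move=> *; nra. Qed.

Lemma Rprod_le (T : finType) (F G : T -> R) : (forall t, 0 <= F t <= G t) -> Rprod F <= Rprod G.
Proof.
move=> H; rewrite /Rprod.
have: 0 <= \big[Rmult/1]_(t : T) F t <= \big[Rmult/1]_(t : T) G t.
  apply: (big_ind2 (fun a b => 0 <= a <= b)) => //; [lra|]. move=> a b c d ? ?; split; nra.
by case.
Qed.

Lemma Rsum_prod (I J : finType) (F : I -> J -> R) :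
  Rprod (fun i => Rsum (fun j => F i j)) = Rsum (fun f : {ffun I -> J} => Rprod (fun i => F i (f i))).
Proof. rewrite /Rprod /Rsum. exact: (bigA_distr_bigA (R:=R) (times:=Rmult) (plus:=Rplus)). Qed.

Lemma Rsum_bool (F : bool -> R) : Rsum F = F true + F false.
Proof. by rewrite /Rsum big_bool. Qed.

Lemma Rsum_mull (T : finType) c (F : T -> R) : Rsum (fun t => c * F t) = c * Rsum F.
Proof. by rewrite /Rsum (big_distrr (times:=Rmult) (plus:=Rplus)). Qed.

Lemma Rprod_1 (T : finType) : Rprod (fun _ : T => 1) = 1.
Proof. rewrite /Rprod; apply: (big_ind (fun a => a = 1)) => //. move=> a b -> ->; lra. Qed.

Section Pert.
Variables (m : nat) (rho : R).
Hypothesis hrho : 0 <= rho <= 1.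
Notation T := {ffun 'I_m -> bool}.

Lemma pw_ge0 (r s : T) : 0 <= pert_weight rho r s.
Proof.
rewrite /pert_weight; apply: Rmult_le_pos; first by apply: pow_le; lra.
by apply: Rprod_ge0 => i; case: ifP => _; lra.
Qed.

Lemma pw_sym (r s : T) : pert_weight rho r s = pert_weight rho s r.
Proof. rewrite /pert_weight /Rprod; congr (_ * _); apply: eq_bigr => i _; by rewrite eq_sym. Qed.

Lemma sum_pw (r : T) : Rsum (fun s => pert_weight rho r s) = (/2) ^ m.
Proof.
rewrite /pert_weight Rsum_mull card_ord.
rewrite -(@Rsum_prod _ _ (fun i b => if r i == b then 1 - rho else rho)).
rewrite {1}/Rprod (eq_bigr (fun _ => 1)); first by rewrite -/(Rprod _) Rprod_1; lra.
move=> i _; rewrite Rsum_bool; case: (r i) => /=; lra.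
Qed.

Lemma Pr_swap (E : T -> T -> bool) : Pr_pert rho E = Pr_pert rho (fun r s => E s r).
Proof.
rewrite /Pr_pert /Rsum exchange_big /=; apply: eq_bigr => r _; apply: eq_bigr => s _.
by rewrite pw_sym.
Qed.

Lemma Pr_bound (E : T -> T -> bool) (G : T -> R) :
  (forall r, 0 <= G r) -> (forall r s, E r s -> 1 <= G r) ->
  Pr_pert rho E <= (/2) ^ m * Rsum G.
Proof.
move=> G0 HG; rewrite /Pr_pert -Rsum_mull.
apply: Rsum_le => r.
apply: (Rle_trans _ (Rsum (fun s => pert_weight rho r s * G r))).
  apply: Rsum_le => s; apply: Rmult_le_compat_l; first exact: pw_ge0.
  rewrite /b2R; case: ifP => [/HG|_]; [lra|exact: G0].
rewrite /Rsum -(big_distrl (times:=Rmult) (plus:=Rplus)) /= -/(Rsum _) sum_pw; lra.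
Qed.
End Pert.

Section Count.
Variables (X Y : finType) (w : {ffun X * Y -> bool}).
Notation m := #|Y|.
Notation T := {ffun 'I_#|Y| -> bool}.

Definition cnt (i : 'I_#|Y|) (b : bool) : nat := \sum_(x : X) (w (x, enum_val i) != b).

Lemma card_diff (r : T) :
  #|[set t | w t != truth_table X r t]| = (\sum_(i : 'I_#|Y|) cnt i (r i))%N.
Proof.
rewrite -sum1dep_card big_mkcond /=.
rewrite (_ : \sum_(p : X * Y) _ = \sum_(x : X) \sum_(y : Y) (if w (x, y) != truth_table X r (x, y) then 1%N else 0%N)); last first.
  by rewrite pair_bigA; apply: eq_bigr; case.
rewrite exchange_big /=.
rewrite (reindex (fun i : 'I_#|Y| => enum_val i)) /=; last by apply: onW_bij; exact: enum_val_bij.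
apply: eq_bigr => i _; rewrite /cnt; apply: eq_bigr => x _.
by rewrite ffunE /= enum_valK; case: (_ != _).
Qed.

Lemma cnt_sum i : addn (cnt i true) (cnt i false) = #|X|.
Proof.
rewrite /cnt -big_split /= -sum1_card; apply: eq_bigr => x _.
by case: (w _).
Qed.
End Count.

Lemma Rprod_exp (I : finType) (F : I -> R) : Rprod (fun i => exp (F i)) = exp (Rsum F).
Proof. rewrite /Rprod /Rsum; symmetry; apply: (big_morph exp exp_plus exp_0). Qed.

Lemma Rsum_INR (I : finType) (F : I -> nat) : Rsum (fun i => INR (F i)) = INR (\sum_i F i).
Proof. rewrite /Rsum; symmetry; apply: (big_morph INR plus_INR (erefl _)). Qed.

Lemma Rprod_const n c : Rprod (fun _ : 'I_n => c) = c ^ n.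
Proof. rewrite /Rprod big_const_ord; elim: n => //= n IH. by rewrite IH. Qed.

Lemma exp_le x y : x <= y -> exp x <= exp y.
Proof. case/Rle_lt_or_eq_dec=> [h|->]; [left; exact: exp_increasing|right; done]. Qed.

Lemma ln_le x y : 0 < x -> x <= y -> ln x <= ln y.
Proof. move=> hx; case/Rle_lt_or_eq_dec=> [h|->]; [left; exact: ln_increasing|right; done]. Qed.

Lemma Rdiv_le_0_compat x y : 0 <= x -> 0 < y -> 0 <= x / y.
Proof. move=> hx hy; apply: Rmult_le_pos => //; left; exact: Rinv_0_lt_compat. Qed.

Section Chernoff.
Variables (d : R) (n : nat).
Hypothesis hd : 0 < d < 1/2.
Hypothesis hn : leq 1 n.
Definition LL := ln ((1 - d) / d).
Definition KK := - LL / INR n.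

Lemma LL_pos : 0 < LL.
Proof. rewrite /LL -ln_1; apply: ln_increasing; first lra.
apply: (Rmult_lt_reg_r d); first lra. rewrite /Rdiv Rmult_assoc Rinv_l; lra. Qed.

Lemma INRn_pos : 0 < INR n.
Proof. apply: lt_0_INR; apply/ltP; done. Qed.

Lemma expmL : exp (- LL) = d / (1 - d).
Proof. rewrite exp_Ropp /LL exp_ln; last first.
  apply: Rdiv_lt_0_compat; lra.
field; lra. Qed.

Lemma factor_bound a b : addn a b = n -> exp (KK * INR a) + exp (KK * INR b) <= / (1 - d).
Proof.
move=> hab.
have hb : INR b = INR n - INR a by rewrite -hab plus_INR; ring.
have hn0 := INRn_pos. have hL := LL_pos.
have ha : 0 <= INR a <= INR n.
  split; first exact: pos_INR. rewrite -hab plus_INR; have := pos_INR b; lra.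
set u := exp (KK * INR a).
have -> : exp (KK * INR b) = exp (- LL) / u.
  rewrite /Rdiv /u -exp_Ropp -exp_plus; congr exp; rewrite hb /KK; field; lra.
rewrite expmL.
have hu1 : u <= 1.
  rewrite /u -exp_0; apply: exp_le; rewrite /KK.
  have : 0 <= LL / INR n * INR a.
    apply: Rmult_le_pos; [apply: Rdiv_le_0_compat|]; lra.
  rewrite /Rdiv; lra.
have hue : d / (1 - d) <= u.
  rewrite -expmL /u; apply: exp_le; rewrite /KK.
  have : LL / INR n * INR a <= LL.
    have -> : LL / INR n * INR a = LL * (INR a / INR n) by field; lra.
    have : INR a / INR n <= 1.
      apply: (Rmult_le_reg_r (INR n)); first lra. rewrite /Rdiv Rmult_assoc Rinv_l; lra.
    have : 0 <= INR a / INR n by apply: Rdiv_le_0_compat; lra.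
    nra.
  rewrite /Rdiv; lra.
have hu0 : 0 < u by apply: exp_pos.
set e := d / (1 - d) in hue *.
have he : / (1 - d) = 1 + e by rewrite /e; field; lra.
rewrite he.
have : e / u <= 1 + e - u.
  apply: (Rmult_le_reg_r u) => //. rewrite /Rdiv Rmult_assoc Rinv_l; last lra.
  have := Rmult_le_pos (1 - u) (u - e) ltac:(lra) ltac:(lra). nra.
lra.
Qed.
End Chernoff.

Section Hinf.
Variables (X Y : finType) (rho d : R) (w : {ffun X * Y -> bool}).
Hypothesis hrho : 0 < rho < 1/2.
Hypothesis hd : 0 < d < 1/2.
Hypothesis hX : leq 1 #|X|.
Hypothesis hY : leq 1 #|Y|.
Notation T := {ffun 'I_#|Y| -> bool}.

Definition GG (r : T) := exp (LL d * d * INR #|Y|) *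
  Rprod (fun i => exp (KK d #|X| * INR (cnt w i (r i)))).

Lemma GG_ge0 r : 0 <= GG r.
Proof. rewrite /GG; apply: Rmult_le_pos; [left; exact: exp_pos|apply: Rprod_ge0 => i; left; exact: exp_pos]. Qed.

Lemma GG_eq r : GG r = exp (LL d * d * INR #|Y| + KK d #|X| * INR (\sum_i cnt w i (r i))).
Proof. by rewrite /GG Rprod_exp Rsum_mull Rsum_INR exp_plus. Qed.

Lemma GG_ge1 r : delta w (truth_table X r) <= d -> 1 <= GG r.
Proof.
rewrite /delta card_diff card_prod mult_INR GG_eq.
set S := INR _.
move=> hdel.
have hn := INRn_pos hX. have hm := INRn_pos hY. have hL := LL_pos hd.
have hS : S <= d * INR #|X| * INR #|Y|.
  apply: (Rmult_le_reg_r (/ (INR #|X| * INR #|Y|))).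
    apply: Rinv_0_lt_compat; nra.
  rewrite -/(Rdiv S _); apply: (Rle_trans _ _ _ hdel); right; field; lra.
have : 0 <= LL d * d * INR #|Y| + KK d #|X| * S.
  rewrite /KK.
  have -> : LL d * d * INR #|Y| + - LL d / INR #|X| * S = LL d / INR #|X| * (d * INR #|X| * INR #|Y| - S) by field; lra.
  apply: Rmult_le_pos; [apply: Rdiv_le_0_compat|]; lra.
move=> h; have := exp_ineq1_le (LL d * d * INR #|Y| + KK d #|X| * S); lra.
Qed.

Lemma GG_sum : Rsum GG <= exp (LL d * d * INR #|Y|) * (/ (1 - d)) ^ #|Y|.
Proof.
rewrite /GG Rsum_mull; apply: Rmult_le_compat_l; first by left; exact: exp_pos.
rewrite -(@Rsum_prod _ _ (fun i b => exp (KK d #|X| * INR (cnt w i b)))).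
rewrite -Rprod_const; apply: Rprod_le => i; split.
  apply: Rsum_ge0 => b; left; exact: exp_pos.
rewrite Rsum_bool; apply: factor_bound => //; exact: cnt_sum.
Qed.

Lemma Hinf_main (E : T -> T -> bool) :
  (forall r s, E r s -> delta w (truth_table X r) <= d) ->
  0 < Pr_pert rho E ->
  (1 - binent d) * INR #|Y| <= - log2 (Pr_pert rho E).
Proof.
move=> HE Hpos.
have hB : Pr_pert rho E <= (/2) ^ #|Y| * (exp (LL d * d * INR #|Y|) * (/ (1 - d)) ^ #|Y|).
  have hPB : Pr_pert rho E <= (/2)^#|Y| * Rsum GG.
    apply: Pr_bound; [lra| exact: GG_ge0 | move=> r s /HE; exact: GG_ge1].
  apply: (Rle_trans _ _ _ hPB).
  apply: Rmult_le_compat_l; [apply: pow_le; lra|exact: GG_sum].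
have hlog := ln_le Hpos hB.
have h2 : 0 < / 2 by lra.
have h1d : 0 < / (1 - d) by apply: Rinv_0_lt_compat; lra.
rewrite ln_mult ?ln_mult ?ln_pow ?ln_exp ?ln_Rinv in hlog; try lra;
  try (apply: pow_lt; lra); try exact: exp_pos; try (apply: Rmult_lt_0_compat; [exact: exp_pos|apply: pow_lt; lra]).
rewrite /LL ln_mult ?ln_Rinv in hlog; try lra; last by apply: Rinv_0_lt_compat; lra.
have hl2 : 0 < ln 2 by have := ln_lt_2; lra.
rewrite /binent /log2.
set P := Pr_pert rho E in hlog *.
set m := INR #|Y| in hlog *.
set l1 := ln (1 - d) in hlog *. set l0 := ln d in hlog *.
have -> : (1 - (- d * (l0 / ln 2) - (1 - d) * (l1 / ln 2))) * m =
   ((ln 2 + d * l0 + (1 - d) * l1) * m) * / ln 2 by field; lra.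
have -> : - (ln P / ln 2) = (- ln P) * / ln 2 by field; lra.
apply: Rmult_le_compat_r; first by left; apply: Rinv_0_lt_compat.
lra.
Qed.
End Hinf.

Lemma Pr_eq (X Y : finType) rho (E : {ffun X * Y -> bool} -> {ffun X * Y -> bool} -> bool) :
  Pr_pert (m:=#|Y|) rho (fun r s => E (truth_table X r) (truth_table X s)) = Pr_D rho E.
Proof.
rewrite /Pr_D /Rsum (reindex (@psi Y)) /=; last by apply: onW_bij; exact: psi_bij.
apply: eq_bigr => r _.
rewrite (reindex (@psi Y)) /=; last by apply: onW_bij; exact: psi_bij.
by apply: eq_bigr => s _; rewrite pw_psi -!tt_psi.
Qed.

Lemma tt_in (X Y : finType) (r : {ffun 'I_#|Y| -> bool}) : truth_table X r \in F_B X Y.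
Proof. by rewrite tt_psi /F_B; apply: imset_f. Qed.

Local Close Scope R_scope.

Theorem mainTheorem5 (X Y : finType) (rho delta2 gamma : R)
  (hX : (0 < #|X|)%N) (hY : (0 < #|Y|)%N)
  (hrho : (0 < rho < 1 / 2)%R) (hdelta2 : (0 < delta2 < 1 / 2)%R)
  (hgamma : (0 < gamma)%R)
  (P : dprotocol {ffun X * Y -> bool} {ffun X * Y -> bool} {ffun X * Y -> bool}) :
  solves_Agree delta2 gamma rho P ->
  comm (dp_comap (truth_table X (Y:=Y)) (truth_table X (Y:=Y)) P) = comm P /\
  solves_Distill ((1 - binent delta2) * INR #|Y|)%R gamma rho
    (dp_comap (truth_table X (Y:=Y)) (truth_table X (Y:=Y)) P).
Proof.
move=> [Hcl Hg]; split; first by rewrite /comm /= depth_comap.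
split; [|split].
- move=> w Hp; apply: (Hinf_main (w:=w)) => // r s /eqP.
  rewrite runA_comap => <-; exact: (proj1 (Hcl _ _ (tt_in _ r) (tt_in _ s))).
- move=> w; have hr01 : (0 <= rho <= 1)%R by lra.
  rewrite (Pr_swap rho).
  move=> Hp; apply: (Hinf_main (w:=w)) => // r s /eqP.
  rewrite runB_comap => <-; exact: (proj2 (Hcl _ _ (tt_in _ s) (tt_in _ r))).
- apply: (Rle_trans _ _ _ Hg); right; rewrite -Pr_eq.
  rewrite /Pr_pert /Rsum; apply: eq_bigr => r _; apply: eq_bigr => s _.
  by rewrite runA_comap runB_comap.
Qed.
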